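(* Let $\omega_1,\dots,\omega_4$ be a basis of $(\mathbb C^4)^\ast$ and set $\Omega_1=\omega_1\wedge\omega_2$, $\Omega_2=\omega_1\wedge\omega_3$, $\Omega_3=\omega_1\wedge\omega_4$, $\Omega_4=\omega_2\wedge\omega_3$, $\Omega_5=-\omega_2\wedge\omega_4$, $\Omega_6=\omega_3\wedge\omega_4$. For $a\in\mathbb C$ the $(2,2)$-form $$\alpha_a=\sum_{j=1}^6\Omega_j\wedge\bar\Omega_j+a\,\Omega_1\wedge\bar\Omega_6+\bar a\,\Omega_6\wedge\bar\Omega_1$$ is positive if and only if $|a|\leq 2$.
   Context: Forms are constant-coefficient forms on $\mathbb C^n$. A $(p,p)$-form $\alpha$ in $\mathbb C^n$ is called positive if for all $(1,0)$-forms $\gamma_1,\dots,\gamma_{n-p}\in(\mathbb C^n)^\ast$ one has $\alpha\wedge i\gamma_1\wedge\bar\gamma_1\wedge\dots\wedge i\gamma_{n-p}\wedge\bar\gamma_{n-p}\geq 0$, meaning this $(n,n)$-form is a nonnegative real multiple of the standard volume form $idz_1\wedge d\bar z_1\wedge\dots\wedge idz_n\wedge d\bar z_n$. *)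

(* Defs.v *)
From HB Require Import structures.
From mathcomp Require Import all_boot all_order all_algebra.
From mathcomp Require Import complex.
From mathcomp Require Import reals.
Set Implicit Arguments. Unset Strict Implicit. Unset Printing Implicit Defensive.
Import Order.TTheory GRing.Theory Num.Theory.
Local Open Scope ring_scope.

(* Generators of the exterior algebra of (C^4)^* (+) conj:
   index k < 4 stands for dz_(k+1), index 4+k stands for dzbar_(k+1).
   A form is given by its coefficients on the basic monomials
   e_S = e_{s1} /\ ... /\ e_{sm}  (s1 < ... < sm, S = {s1,...,sm}). *)
Notation form C := {ffun {set 'I_8} -> C}.

Definition shuffle_sign (C : nzRingType) (A B : {set 'I_8}) : C :=
  (-1) ^+ #|[set p : 'I_8 * 'I_8 | [&& p.1 \in A, p.2 \in B & (p.2 < p.1)%N]]|.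

Definition wedge (C : nzRingType) (f g : form C) : form C :=
  [ffun S : {set 'I_8} =>
     \sum_(A : {set 'I_8} | A \subset S)
        shuffle_sign C A (S :\: A) * f A * g (S :\: A)].

Notation "f /\\ g" := (wedge f g) (at level 40, left associativity).

Definition fscale (C : nzRingType) (c : C) (f : form C) : form C :=
  [ffun S => c * f S].
Notation "c *f f" := (fscale c f) (at level 40).

Definition mono (C : nzRingType) (S : {set 'I_8}) : form C :=
  [ffun T => (T == S)%:R].

Definition dz (C : nzRingType) (k : 'I_4) : form C := mono C [set inord k].
Definition dzb (C : nzRingType) (k : 'I_4) : form C := mono C [set inord (k + 4)%N].

Definition hol (C : numClosedFieldType) (v : 'rV[C]_4) : form C :=
  \sum_(k < 4) v 0 k *f dz C k.
Definition ahol (C : numClosedFieldType) (v : 'rV[C]_4) : form C :=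
  \sum_(k < 4) (v 0 k)^* *f dzb C k.

Definition idzdzb (C : numClosedFieldType) (k : 'I_4) : form C :=
  'i *f (dz C k /\\ dzb C k).
Definition volume (C : numClosedFieldType) : form C :=
  idzdzb C 0 /\\ idzdzb C 1 /\\ idzdzb C 2 /\\ idzdzb C 3.

(* positivity of a (2,2)-form on C^4 (n = 4, p = 2, n - p = 2) *)
Definition positive22 (C : numClosedFieldType) (alpha : form C) : Prop :=
  forall g1 g2 : 'rV[C]_4,
    exists c : C, 0 <= c /\
      alpha /\\ ('i *f (hol g1 /\\ ahol g1)) /\\ ('i *f (hol g2 /\\ ahol g2))
      = c *f volume C.

Definition alpha_a (R : realType) (w : 'M[R[i]]_4) (a : R[i]) : form R[i] :=
  let om k := row k w in
  let Om j := match j with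
              | 0%N => hol (om 0) /\\ hol (om 1)
              | 1%N => hol (om 0) /\\ hol (om 2)
              | 2%N => hol (om 0) /\\ hol (om 3)
              | 3%N => hol (om 1) /\\ hol (om 2)
              | 4%N => - (hol (om 1) /\\ hol (om 3))
              | _ => hol (om 2) /\\ hol (om 3) end in
  let Omb j := match j with
              | 0%N => ahol (om 0) /\\ ahol (om 1)
              | 1%N => ahol (om 0) /\\ ahol (om 2)
              | 2%N => ahol (om 0) /\\ ahol (om 3)
              | 3%N => ahol (om 1) /\\ ahol (om 2)
              | 4%N => - (ahol (om 1) /\\ ahol (om 3))
              | _ => ahol (om 2) /\\ ahol (om 3) end in
  \sum_(j < 6) (Om j /\\ Omb j)
  + a *f (Om 0%N /\\ Omb 5%N) + a^* *f (Om 5%N /\\ Omb 0%N).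

(* Main.v *)
Require Import Defs.
From HB Require Import structures.
From mathcomp Require Import all_boot all_order all_algebra.
From mathcomp Require Import complex.
From mathcomp Require Import reals.
From mathcomp Require Import ring.
Import Order.TTheory GRing.Theory Num.Theory.
Local Open Scope ring_scope.

Module Aux.
Set Implicit Arguments. Unset Strict Implicit. Unset Printing Implicit Defensive.

Section Ext.
Variable C : numClosedFieldType.
Local Notation F := {ffun {set 'I_8} -> C}.
Local Notation ss := (shuffle_sign C).

Lemma addfE (f g : F) S : (f + g) S = f S + g S. Proof. by rewrite ffunE. Qed.
Lemma oppfE (f : F) S : (- f) S = - f S. Proof. by rewrite ffunE. Qed.
Lemma zerofE S : (0 : F) S = 0. Proof. by rewrite ffunE. Qed.
Lemma sumfE I (r : seq I) (P : pred I) (G : I -> F) S :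
  (\sum_(i <- r | P i) G i) S = \sum_(i <- r | P i) G i S.
Proof.
elim/big_rec2: _ => [|i a b _ <-]; first by rewrite zerofE.
by rewrite addfE.
Qed.
Lemma scalefE c (f : F) S : (c *f f) S = c * f S. Proof. by rewrite ffunE. Qed.
Lemma monoE S T : mono C S T = (T == S)%:R. Proof. by rewrite ffunE. Qed.
Lemma wedgeE (f g : F) S : (f /\\ g) S =
  \sum_(A : {set 'I_8} | A \subset S) ss A (S :\: A) * f A * g (S :\: A).
Proof. by rewrite ffunE. Qed.

Lemma wedgeDl (f g h : F) : (f + g) /\\ h = f /\\ h + g /\\ h.
Proof.
apply/ffunP => S; rewrite addfE !wedgeE -big_split; apply: eq_bigr => A _.
by rewrite addfE /=; ring.
Qed.
Lemma wedgeDr (f g h : F) : h /\\ (f + g) = h /\\ f + h /\\ g.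
Proof.
apply/ffunP => S; rewrite addfE !wedgeE -big_split; apply: eq_bigr => A _.
by rewrite addfE /=; ring.
Qed.
Lemma wedgeZl c (f g : F) : (c *f f) /\\ g = c *f (f /\\ g).
Proof.
apply/ffunP => S; rewrite scalefE !wedgeE mulr_sumr; apply: eq_bigr => A _.
by rewrite scalefE; ring.
Qed.
Lemma wedgeZr c (f g : F) : f /\\ (c *f g) = c *f (f /\\ g).
Proof.
apply/ffunP => S; rewrite scalefE !wedgeE mulr_sumr; apply: eq_bigr => A _.
by rewrite scalefE; ring.
Qed.
Lemma wedge0l (f : F) : 0 /\\ f = 0.
Proof. by apply/ffunP => S; rewrite zerofE wedgeE big1 // => A _; rewrite zerofE; ring. Qed.
Lemma wedge0r (f : F) : f /\\ 0 = 0.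
Proof. by apply/ffunP => S; rewrite zerofE wedgeE big1 // => A _; rewrite zerofE; ring. Qed.
Lemma wedgeNl (f g : F) : (- f) /\\ g = - (f /\\ g).
Proof.
apply/ffunP => S; rewrite oppfE !wedgeE -sumrN; apply: eq_bigr => A _.
by rewrite oppfE; ring.
Qed.
Lemma wedgeNr (f g : F) : f /\\ (- g) = - (f /\\ g).
Proof.
apply/ffunP => S; rewrite oppfE !wedgeE -sumrN; apply: eq_bigr => A _.
by rewrite oppfE; ring.
Qed.
Lemma wedge_suml I (r : seq I) (P : pred I) (G : I -> F) g :
  (\sum_(i <- r | P i) G i) /\\ g = \sum_(i <- r | P i) (G i /\\ g).
Proof.
elim/big_rec2: _ => [|i a b _ <-]; first by rewrite wedge0l.
by rewrite wedgeDl.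
Qed.
Lemma wedge_sumr I (r : seq I) (P : pred I) (G : I -> F) g :
  g /\\ (\sum_(i <- r | P i) G i) = \sum_(i <- r | P i) (g /\\ G i).
Proof.
elim/big_rec2: _ => [|i a b _ <-]; first by rewrite wedge0r.
by rewrite wedgeDr.
Qed.
Lemma scalefA a b (f : F) : a *f (b *f f) = (a * b) *f f.
Proof. by apply/ffunP => S; rewrite !scalefE mulrA. Qed.
Lemma scale1f (f : F) : 1 *f f = f.
Proof. by apply/ffunP => S; rewrite !scalefE mul1r. Qed.
Lemma scale0f (f : F) : 0 *f f = 0.
Proof. by apply/ffunP => S; rewrite !scalefE zerofE mul0r. Qed.
Lemma scalef0 a : a *f (0 : F) = 0.
Proof. by apply/ffunP => S; rewrite !scalefE zerofE mulr0. Qed.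
Lemma scalefN a (f : F) : a *f (- f) = - (a *f f).
Proof. by apply/ffunP => S; rewrite !scalefE !oppfE scalefE mulrN. Qed.
Lemma scaleNf a (f : F) : (- a) *f f = - (a *f f).
Proof. by apply/ffunP => S; rewrite !scalefE !oppfE scalefE mulNr. Qed.
Lemma scalefD a (f g : F) : a *f (f + g) = a *f f + a *f g.
Proof. by apply/ffunP => S; rewrite !scalefE !addfE !scalefE mulrDr. Qed.

Lemma expand (f : F) : f = \sum_S f S *f mono C S.
Proof.
apply/ffunP => T; rewrite sumfE (bigD1 T) //= scalefE monoE eqxx mulr1.
rewrite big1 ?addr0 // => S hS; rewrite scalefE monoE eq_sym (negbTE hS) mulr0 //.
Qed.

Lemma disjP (A B : {set 'I_8}) : reflect (forall x, x \in A -> x \notin B) [disjoint A & B].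
Proof.
apply: (iffP idP) => [H x xA|H]; first by rewrite (disjointFr H xA).
by rewrite disjoint_subset; apply/subsetP => x /H; rewrite !inE.
Qed.

Definition prs (A B : {set 'I_8}) :=
  [set p : 'I_8 * 'I_8 | [&& p.1 \in A, p.2 \in B & (p.2 < p.1)%N]].
Lemma ssE (A B : {set 'I_8}) : ss A B = (-1) ^+ #|prs A B|. Proof. by []. Qed.

Lemma ssUl (A B D : {set 'I_8}) : [disjoint A & B] -> ss (A :|: B) D = ss A D * ss B D.
Proof.
move=> dAB; rewrite !ssE -exprD.
have -> : prs (A :|: B) D = prs A D :|: prs B D.
  apply/setP => p; rewrite !inE.
  by case: (p.1 \in A); case: (p.1 \in B); rewrite //= ?orbb ?orbF.
rewrite cardsU.
have -> : prs A D :&: prs B D = set0.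
  apply/setP => p; rewrite !inE; apply/negbTE; apply/negP.
  move=> /andP[/and3P[pA _ _] /and3P[pB _ _]].
  by move/disjP: dAB => /(_ _ pA); rewrite pB.
by rewrite cards0 subn0.
Qed.

Lemma ssUr (A B D : {set 'I_8}) : [disjoint B & D] -> ss A (B :|: D) = ss A B * ss A D.
Proof.
move=> dBD; rewrite !ssE -exprD.
have -> : prs A (B :|: D) = prs A B :|: prs A D.
  apply/setP => p; rewrite !inE.
  by case: (p.1 \in A); case: (p.2 \in B); case: (p.2 \in D); rewrite //= ?orbb ?orbF.
rewrite cardsU.
have -> : prs A B :&: prs A D = set0.
  apply/setP => p; rewrite !inE; apply/negbTE; apply/negP.
  move=> /andP[/and3P[_ pB _] /and3P[_ pD _]].
  by move/disjP: dBD => /(_ _ pB); rewrite pD.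
by rewrite cards0 subn0.
Qed.

Lemma ssC (A B : {set 'I_8}) : [disjoint A & B] -> ss A B * ss B A = (-1) ^+ (#|A| * #|B|).
Proof.
move=> dAB; rewrite !ssE -exprD.
pose Q := [set p : 'I_8 * 'I_8 | [&& p.1 \in A, p.2 \in B & (p.1 < p.2)%N]].
have -> : prs B A = swap_pair @^-1: Q.
  by apply/setP => -[x y]; rewrite !inE /=; case: (x \in B); case: (y \in A).
rewrite (card_preimset (f := swap_pair) Q); last exact: (can_inj swap_pairK).
rewrite -cardsX -cardsUI.
have -> : prs A B :&: Q = set0.
  apply/setP => p; rewrite !inE; apply/negbTE; apply/negP.
  move=> /andP[/and3P[_ _ h1] /and3P[_ _ h2]].
  by move: (ltn_trans h1 h2); rewrite ltnn.
have -> : prs A B :|: Q = setX A B.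
  apply/setP => [[x y]]; rewrite !inE /=.
  case xA: (x \in A); case yB: (y \in B) => //=.
  have : x != y by apply: contraTneq yB => <-; move/disjP: dAB => /(_ _ xA) /negbTE ->.
  by rewrite -val_eqE neq_ltn orbC.
by rewrite cards0 addn0.
Qed.

Lemma setUDK' (A S : {set 'I_8}) : A \subset S -> A :|: (S :\: A) = S.
Proof.
move=> sAS; apply/setP => x; rewrite !inE.
by case xA: (x \in A) => //=; rewrite (subsetP sAS x xA).
Qed.
Lemma setUKD' (A B : {set 'I_8}) : [disjoint A & B] -> (A :|: B) :\: A = B.
Proof.
move=> /disjP dAB; apply/setP => x; rewrite !inE.
by case xA: (x \in A) => //=; rewrite (negbTE (dAB x xA)).
Qed.
Lemma disjD (A S : {set 'I_8}) : [disjoint A & S :\: A].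
Proof. by apply/disjP => x xA; rewrite !inE xA. Qed.

Lemma monoW (A B : {set 'I_8}) :
  mono C A /\\ mono C B = (if [disjoint A & B] then ss A B else 0) *f mono C (A :|: B).
Proof.
apply/ffunP => S; rewrite wedgeE scalefE monoE.
rewrite (eq_bigr (fun A' => ss A' (S :\: A') * (A' == A)%:R * (S :\: A' == B)%:R));
  last by move=> A' _; rewrite !monoE.
rewrite big_mkcond (bigD1 A) //= big1 ?addr0; last first.
  by move=> A' /negbTE ->; rewrite mulr0 mul0r; case: ifP.
rewrite eqxx mulr1.
case: ifP => sAS.
- case: (boolP (S :\: A == B)) => [/eqP E|E].
  + have dAB : [disjoint A & B] by rewrite -E disjD.
    by rewrite dAB -E setUDK' // eqxx E.
  + case: (boolP [disjoint A & B]) => dAB; last by rewrite !mul0r mulr0.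
    case: (boolP (S == A :|: B)) => [/eqP eS|]; last by rewrite !mulr0.
    by move: E; rewrite eS setUKD' ?eqxx.
- case: (boolP [disjoint A & B]) => dAB; last by rewrite !mul0r.
  case: (boolP (S == A :|: B)) => [/eqP eS|]; last by rewrite !mulr0.
  by move: sAS; rewrite eS subsetUl.
Qed.

Lemma disjUl (A B D : {set 'I_8}) :
  [disjoint A :|: B & D] = [disjoint A & D] && [disjoint B & D].
Proof.
apply/disjP/andP => [H|[/disjP H1 /disjP H2]].
  by split; apply/disjP => x xA; apply: H; rewrite inE xA ?orbT.
by move=> x; rewrite inE => /orP[/H1|/H2].
Qed.
Lemma disjUr (A B D : {set 'I_8}) :
  [disjoint A & B :|: D] = [disjoint A & B] && [disjoint A & D].
Proof. by rewrite disjoint_sym disjUl !(disjoint_sym _ A). Qed.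

Lemma mono_assoc (A B D : {set 'I_8}) :
  (mono C A /\\ mono C B) /\\ mono C D = mono C A /\\ (mono C B /\\ mono C D).
Proof.
rewrite monoW wedgeZl monoW scalefA monoW wedgeZr monoW scalefA setUA.
congr (_ *f _); rewrite disjUl disjUr.
case dAB: [disjoint A & B]; case dAD: [disjoint A & D]; case dBD: [disjoint B & D];
  rewrite /= ?mul0r ?mulr0 //.
by rewrite ssUl // ssUr //; ring.
Qed.

Lemma assoc2 (A B : {set 'I_8}) (h : F) :
  (mono C A /\\ mono C B) /\\ h = mono C A /\\ (mono C B /\\ h).
Proof.
rewrite [h]expand !wedge_sumr; apply: eq_bigr => D _.
by rewrite !wedgeZr mono_assoc.
Qed.
Lemma assoc1 (A : {set 'I_8}) (g h : F) :
  (mono C A /\\ g) /\\ h = mono C A /\\ (g /\\ h).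
Proof.
rewrite [g]expand wedge_sumr wedge_suml wedge_suml wedge_sumr; apply: eq_bigr => B _.
by rewrite wedgeZr wedgeZl assoc2 wedgeZl wedgeZr.
Qed.
Lemma wedgeA (f g h : F) : (f /\\ g) /\\ h = f /\\ (g /\\ h).
Proof.
rewrite [f]expand !wedge_suml; apply: eq_bigr => A _.
by rewrite !wedgeZl assoc1.
Qed.

Definition homog (p : nat) (f : F) := forall S : {set 'I_8}, #|S| != p -> f S = 0.

Lemma homog_mono (S : {set 'I_8}) : homog #|S| (mono C S).
Proof. move=> T nT; rewrite monoE; case: eqP => // eT; by move: nT; rewrite eT eqxx. Qed.
Lemma homogD p (f g : F) : homog p f -> homog p g -> homog p (f + g).
Proof. by move=> hf hg S nS; rewrite addfE hf // hg // addr0. Qed.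
Lemma homogZ p c (f : F) : homog p f -> homog p (c *f f).
Proof. by move=> hf S nS; rewrite scalefE hf // mulr0. Qed.
Lemma homogN p (f : F) : homog p f -> homog p (- f).
Proof. by move=> hf S nS; rewrite oppfE hf // oppr0. Qed.
Lemma homog0 p : homog p 0.
Proof. by move=> S _; rewrite zerofE. Qed.
Lemma homog_sum p I (r : seq I) (P : pred I) (G : I -> F) :
  (forall i, P i -> homog p (G i)) -> homog p (\sum_(i <- r | P i) G i).
Proof.
move=> H; elim/big_rec: _ => [|i x Pi hx]; first exact: homog0.
by apply: homogD => //; apply: H.
Qed.
Lemma homogW p q (f g : F) : homog p f -> homog q g -> homog (p + q) (f /\\ g).
Proof.
move=> hf hg S nS; rewrite wedgeE big1 // => A sAS.
case: (eqVneq #|A| p) => [eA|nA]; last by rewrite hf // mulr0 mul0r.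
case: (eqVneq #|S :\: A| q) => [eB|nB]; last by rewrite hg // mulr0.
exfalso; move/negP: nS; apply.
by rewrite -eA -eB cardsDS // subnKC // subset_leq_card.
Qed.

Lemma sign2 k : (-1) ^+ k * (-1) ^+ k = 1 :> C.
Proof. by rewrite -exprD addnn -mul2n exprM expr2 mulN1r opprK expr1n. Qed.

Lemma mono_comm (A B : {set 'I_8}) :
  mono C A /\\ mono C B = (-1) ^+ (#|A| * #|B|) *f (mono C B /\\ mono C A).
Proof.
rewrite !monoW scalefA disjoint_sym setUC; congr (_ *f _).
case: ifP => d; last by rewrite mulr0.
by rewrite mulnC -(ssC d) mulrAC [ss B A]ssE sign2 mul1r.
Qed.

Lemma scalef_sum c I (r : seq I) (P : pred I) (G : I -> F) :
  c *f (\sum_(i <- r | P i) G i) = \sum_(i <- r | P i) (c *f G i).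
Proof.
elim/big_rec2: _ => [|i x y _ <-]; last by rewrite scalefD.
by apply/ffunP => S; rewrite scalefE zerofE mulr0.
Qed.

Lemma wedge_exp (f g : F) : f /\\ g =
  \sum_(A : {set 'I_8}) \sum_(B : {set 'I_8}) (f A * g B) *f (mono C A /\\ mono C B).
Proof.
rewrite {1}[f]expand {1}[g]expand wedge_suml; apply: eq_bigr => A _.
rewrite wedgeZl wedge_sumr scalef_sum; apply: eq_bigr => B _.
by rewrite wedgeZr scalefA.
Qed.

Lemma wedgeC p q (f g : F) : homog p f -> homog q g ->
  f /\\ g = (-1) ^+ (p * q) *f (g /\\ f).
Proof.
move=> hf hg; rewrite wedge_exp [in RHS]wedge_exp [in RHS]exchange_big scalef_sum.
apply: eq_bigr => A _; rewrite scalef_sum; apply: eq_bigr => B _.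
case: (eqVneq #|A| p) => [eA|nA]; last by rewrite hf // mul0r mulr0 !scale0f scalef0.

case: (eqVneq #|B| q) => [eB|nB]; last by rewrite hg // mul0r mulr0 !scale0f scalef0.
by rewrite mono_comm !scalefA -eA -eB; congr (_ *f _); ring.
Qed.

Lemma wedge_anti (u v : F) : homog 1 u -> homog 1 v -> u /\\ v = - (v /\\ u).
Proof. by move=> hu hv; rewrite (wedgeC hu hv) expr1 scaleNf scale1f. Qed.

Lemma wedge_sq (u : F) : homog 1 u -> u /\\ u = 0.
Proof.
move=> hu; have := wedge_anti hu hu => E.
apply/ffunP => S; rewrite zerofE; have /eqP := congr1 (fun h : F => h S) E.
rewrite oppfE -subr_eq0 opprK -mulr2n mulrn_eq0 /= => /eqP //.
Qed.

Lemma wedgeC2 (f g : F) : homog 2 f -> homog 2 g -> f /\\ g = g /\\ f.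
Proof. by move=> hf hg; rewrite (wedgeC hf hg) -signr_odd /= expr0 scale1f. Qed.

Section OneForms.
Implicit Types (f u v w : F).

Lemma rep1 f u : homog 1 u -> (f /\\ u) /\\ u = 0.
Proof. by move=> hu; rewrite wedgeA wedge_sq // wedge0r. Qed.
Lemma swapL f u v : homog 1 u -> homog 1 v -> (f /\\ u) /\\ v = - ((f /\\ v) /\\ u).
Proof. by move=> hu hv; rewrite !wedgeA (wedge_anti hu hv) wedgeNr. Qed.
Lemma rep2 f u v : homog 1 u -> homog 1 v -> ((f /\\ u) /\\ v) /\\ u = 0.
Proof. by move=> hu hv; rewrite (swapL _ hv hu) rep1 // wedge0l oppr0. Qed.
Lemma rep2' u v : homog 1 u -> homog 1 v -> (u /\\ v) /\\ u = 0.
Proof. by move=> hu hv; rewrite (wedge_anti hu hv) wedgeNl rep1 // oppr0. Qed.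
Lemma rep3' u v w : homog 1 u -> homog 1 v -> homog 1 w -> ((u /\\ v) /\\ w) /\\ u = 0.
Proof. by move=> hu hv hw; rewrite (swapL _ hw hu) rep2' // wedge0l oppr0. Qed.
End OneForms.

Section Four.
Variables u0 u1 u2 u3 : F.
Hypotheses (h0 : homog 1 u0) (h1 : homog 1 u1) (h2 : homog 1 u2) (h3 : homog 1 u3).
Definition G4 (x0 x1 x2 x3 : C) := x0 *f u0 + x1 *f u1 + x2 *f u2 + x3 *f u3.
Definition U4 := ((u0 /\\ u1) /\\ u2) /\\ u3.

Lemma P0132 : ((u0 /\\ u1) /\\ u3) /\\ u2 = - U4.
Proof. by rewrite swapL. Qed.
Lemma P0213 : ((u0 /\\ u2) /\\ u1) /\\ u3 = - U4.
Proof. by rewrite (swapL u0 h2 h1) wedgeNl. Qed.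
Lemma P0231 : ((u0 /\\ u2) /\\ u3) /\\ u1 = U4.
Proof. by rewrite (swapL _ h3 h1) P0213 opprK. Qed.
Lemma P0312 : ((u0 /\\ u3) /\\ u1) /\\ u2 = U4.
Proof. by rewrite (swapL u0 h3 h1) wedgeNl P0132 opprK. Qed.
Lemma P0321 : ((u0 /\\ u3) /\\ u2) /\\ u1 = - U4.
Proof. by rewrite (swapL _ h2 h1) P0312. Qed.
Lemma P1203 : ((u1 /\\ u2) /\\ u0) /\\ u3 = U4.
Proof. by rewrite (swapL u1 h2 h0) (wedge_anti h1 h0) !wedgeNl opprK. Qed.
Lemma P1230 : ((u1 /\\ u2) /\\ u3) /\\ u0 = - U4.
Proof. by rewrite (swapL _ h3 h0) P1203. Qed.
Lemma P1302 : ((u1 /\\ u3) /\\ u0) /\\ u2 = - U4.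
Proof. by rewrite (swapL u1 h3 h0) (wedge_anti h1 h0) !wedgeNl opprK P0132. Qed.
Lemma P1320 : ((u1 /\\ u3) /\\ u2) /\\ u0 = U4.
Proof. by rewrite (swapL _ h2 h0) P1302 opprK. Qed.
Lemma P2301 : ((u2 /\\ u3) /\\ u0) /\\ u1 = U4.
Proof.
by rewrite (swapL u2 h3 h0) (wedge_anti h2 h0) !wedgeNl opprK P0231.
Qed.
Lemma P2310 : ((u2 /\\ u3) /\\ u1) /\\ u0 = - U4.
Proof. by rewrite (swapL _ h1 h0) P2301. Qed.

Ltac expandW :=
  rewrite ?(wedgeDl, wedgeDr, wedgeZl, wedgeZr);
  rewrite ?rep1 ?rep2 ?rep2' ?rep3' ?wedge0l ?wedge0r ?scalef0 ?addr0 ?add0r //.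

Ltac pointwise := apply/ffunP => S; rewrite ?(addfE, scalefE, oppfE, zerofE); ring.

Lemma T01 x0 x1 x2 x3 y0 y1 y2 y3 :
  (u0 /\\ u1) /\\ (G4 x0 x1 x2 x3 /\\ G4 y0 y1 y2 y3) = (x2 * y3 - x3 * y2) *f U4.
Proof. rewrite -wedgeA /G4; expandW. rewrite P0132 -/U4. pointwise. Qed.

Lemma T02 x0 x1 x2 x3 y0 y1 y2 y3 :
  (u0 /\\ u2) /\\ (G4 x0 x1 x2 x3 /\\ G4 y0 y1 y2 y3) = (- (x1 * y3 - x3 * y1)) *f U4.
Proof. rewrite -wedgeA /G4; expandW. rewrite P0213 P0231 -/U4. pointwise. Qed.
Lemma T03 x0 x1 x2 x3 y0 y1 y2 y3 :
  (u0 /\\ u3) /\\ (G4 x0 x1 x2 x3 /\\ G4 y0 y1 y2 y3) = (x1 * y2 - x2 * y1) *f U4.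
Proof. rewrite -wedgeA /G4; expandW. rewrite P0312 P0321 -/U4. pointwise. Qed.
Lemma T12 x0 x1 x2 x3 y0 y1 y2 y3 :
  (u1 /\\ u2) /\\ (G4 x0 x1 x2 x3 /\\ G4 y0 y1 y2 y3) = (x0 * y3 - x3 * y0) *f U4.
Proof. rewrite -wedgeA /G4; expandW. rewrite P1203 P1230 -/U4. pointwise. Qed.
Lemma T13 x0 x1 x2 x3 y0 y1 y2 y3 :
  (u1 /\\ u3) /\\ (G4 x0 x1 x2 x3 /\\ G4 y0 y1 y2 y3) = (- (x0 * y2 - x2 * y0)) *f U4.
Proof. rewrite -wedgeA /G4; expandW. rewrite P1302 P1320 -/U4. pointwise. Qed.
Lemma T23 x0 x1 x2 x3 y0 y1 y2 y3 :
  (u2 /\\ u3) /\\ (G4 x0 x1 x2 x3 /\\ G4 y0 y1 y2 y3) = (x0 * y1 - x1 * y0) *f U4.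
Proof. rewrite -wedgeA /G4; expandW. rewrite P2301 P2310 -/U4. pointwise. Qed.

Lemma Pair x0 x1 x2 x3 y0 y1 y2 y3 :
  G4 x0 x1 x2 x3 /\\ G4 y0 y1 y2 y3 =
  (x0 * y1 - x1 * y0) *f (u0 /\\ u1) + (x0 * y2 - x2 * y0) *f (u0 /\\ u2)
  + (x0 * y3 - x3 * y0) *f (u0 /\\ u3) + (x1 * y2 - x2 * y1) *f (u1 /\\ u2)
  + (x1 * y3 - x3 * y1) *f (u1 /\\ u3) + (x2 * y3 - x3 * y2) *f (u2 /\\ u3).
Proof.
rewrite /G4 ?(wedgeDl, wedgeDr, wedgeZl, wedgeZr) !wedge_sq // ?scalef0 ?addr0 ?add0r.
rewrite (wedge_anti h1 h0) (wedge_anti h2 h0) (wedge_anti h3 h0).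
rewrite (wedge_anti h2 h1) (wedge_anti h3 h1) (wedge_anti h3 h2).
pointwise.
Qed.

Definition det4 (a0 a1 a2 a3 b0 b1 b2 b3 c0 c1 c2 c3 d0 d1 d2 d3 : C) :=
  (a0*b1 - a1*b0) * (c2*d3 - c3*d2) - (a0*b2 - a2*b0) * (c1*d3 - c3*d1)
  + (a0*b3 - a3*b0) * (c1*d2 - c2*d1) + (a1*b2 - a2*b1) * (c0*d3 - c3*d0)
  - (a1*b3 - a3*b1) * (c0*d2 - c2*d0) + (a2*b3 - a3*b2) * (c0*d1 - c1*d0).

Lemma W4 a0 a1 a2 a3 b0 b1 b2 b3 c0 c1 c2 c3 d0 d1 d2 d3 :
  ((G4 a0 a1 a2 a3 /\\ G4 b0 b1 b2 b3) /\\ G4 c0 c1 c2 c3) /\\ G4 d0 d1 d2 d3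
  = det4 a0 a1 a2 a3 b0 b1 b2 b3 c0 c1 c2 c3 d0 d1 d2 d3 *f U4.
Proof.
rewrite wedgeA Pair; set Q := (G4 c0 c1 c2 c3 /\\ G4 d0 d1 d2 d3).
rewrite !wedgeDl !wedgeZl /Q T01 T02 T03 T12 T13 T23 /det4.
pointwise.
Qed.

End Four.

Lemma hW11 (u v : F) : homog 1 u -> homog 1 v -> homog 2 (u /\\ v).
Proof. exact: homogW. Qed.

Lemma step3 (X u v P Q : F) : homog 1 u -> homog 1 v -> homog 2 P ->
  (X /\\ (u /\\ v)) /\\ (P /\\ Q) = (X /\\ P) /\\ ((u /\\ v) /\\ Q).
Proof.
move=> hu hv hP.
by rewrite wedgeA -(wedgeA _ P Q) (wedgeC2 (hW11 hu hv) hP) !wedgeA.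
Qed.

Lemma Gam (g1 h1 g2 h2 : F) : homog 1 g1 -> homog 1 h1 -> homog 1 g2 -> homog 1 h2 ->
  ('i *f (g1 /\\ h1)) /\\ ('i *f (g2 /\\ h2)) = (g1 /\\ g2) /\\ (h1 /\\ h2).
Proof.
move=> a b c d; rewrite wedgeZl wedgeZr scalefA -expr2 sqrCi scaleNf scale1f.
rewrite -(wedgeA _ g2 h2) (wedgeA g1 h1 g2) (wedge_anti b c) wedgeNr wedgeNl.
by rewrite -wedgeA opprK wedgeA.
Qed.

Lemma shuf k (A B a b : F) : homog k B -> homog 1 a ->
  (A /\\ B) /\\ (a /\\ b) = (-1) ^+ k *f ((A /\\ a) /\\ (B /\\ b)).
Proof.
move=> hB ha; rewrite wedgeA -(wedgeA B a b) (wedgeC hB ha) muln1 wedgeZl wedgeZr.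
by rewrite (wedgeA a B b) -wedgeA.
Qed.

Lemma mono_lt (A B : {set 'I_8}) :
  (forall a b, a \in A -> b \in B -> (a < b)%N) -> mono C A /\\ mono C B = mono C (A :|: B).
Proof.
move=> H; rewrite monoW.
have -> : [disjoint A & B].
  by apply/disjP => x xA; apply/negP => xB; move: (H x x xA xB); rewrite ltnn.
rewrite ssE; have -> : prs A B = set0.
  apply/setP => p; rewrite !inE; apply/negbTE; apply/negP => /and3P[p1 p2 lt].
  by move: (ltn_trans lt (H _ _ p1 p2)); rewrite ltnn.
by rewrite cards0 expr0 scale1f.
Qed.

Lemma cancelf (c : C) (f : F) : f <> 0 -> c *f f = f -> c = 1.
Proof.
move=> nf E; apply/eqP; apply/negPn/negP => nc; apply: nf; apply/ffunP => S.
have := congr1 (fun h : F => h S) E; rewrite scalefE zerofE => /eqP.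
by rewrite -subr_eq0 -{2}(mul1r (f S)) -mulrBl mulf_eq0 subr_eq0 (negbTE nc) /= => /eqP.
Qed.
End Ext.
Lemma negneg (C : numClosedFieldType) (X Y : {ffun {set 'I_8} -> C}) : (- X) /\\ (- Y) = X /\\ Y.
Proof. by rewrite wedgeNl wedgeNr opprK. Qed.

Section Conc.
Variable C : numClosedFieldType.
Local Notation F := {ffun {set 'I_8} -> C}.

Lemma sum4 (G : 'I_4 -> F) : \sum_(k < 4) G k = G 0 + G 1 + G 2 + G 3.
Proof.
rewrite !big_ord_recl big_ord0 addr0 !addrA.
by congr (G _ + G _ + G _ + G _); apply/val_inj.
Qed.

Lemma homog_dz k : homog 1 (dz C k).
Proof. by have := @homog_mono C [set (inord k : 'I_8)]; rewrite cards1. Qed.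
Lemma homog_dzb k : homog 1 (dzb C k).
Proof. by have := @homog_mono C [set (inord (k + 4) : 'I_8)]; rewrite cards1. Qed.
Lemma homog_hol (v : 'rV[C]_4) : homog 1 (hol v).
Proof. by apply: homog_sum => k _; apply: homogZ; apply: homog_dz. Qed.
Lemma homog_ahol (v : 'rV[C]_4) : homog 1 (ahol v).
Proof. by apply: homog_sum => k _; apply: homogZ; apply: homog_dzb. Qed.

Lemma hol_G (v : 'rV[C]_4) : hol v =
  G4 (dz C 0) (dz C 1) (dz C 2) (dz C 3) (v 0 0) (v 0 1) (v 0 2) (v 0 3).
Proof. by rewrite /hol sum4. Qed.
Lemma ahol_G (v : 'rV[C]_4) : ahol v =
  G4 (dzb C 0) (dzb C 1) (dzb C 2) (dzb C 3) (v 0 0)^* (v 0 1)^* (v 0 2)^* (v 0 3)^*.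
Proof. by rewrite /ahol sum4. Qed.

Lemma hol_mul (x : 'rV[C]_4) (w : 'M[C]_4) :
  hol (x *m w) = \sum_(k < 4) x 0 k *f hol (row k w).
Proof.
apply/ffunP => S; rewrite /hol !sumfE.
rewrite (eq_bigr (fun j => \sum_k x 0 k * (w k j * dz C j S))); last first.
  by move=> j _; rewrite scalefE !mxE mulr_suml; apply: eq_bigr => k _; rewrite mulrA.
rewrite exchange_big; apply: eq_bigr => k _; rewrite scalefE sumfE mulr_sumr.
by apply: eq_bigr => j _; rewrite scalefE !mxE.
Qed.

Lemma ahol_mul (x : 'rV[C]_4) (w : 'M[C]_4) :
  ahol (x *m w) = \sum_(k < 4) (x 0 k)^* *f ahol (row k w).
Proof.
apply/ffunP => S; rewrite /ahol !sumfE.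
rewrite (eq_bigr (fun j => \sum_k (x 0 k)^* * ((w k j)^* * dzb C j S))); last first.
  move=> j _; rewrite scalefE !mxE rmorph_sum mulr_suml; apply: eq_bigr => k _.
  by rewrite rmorphM mulrA.
rewrite exchange_big; apply: eq_bigr => k _; rewrite scalefE sumfE mulr_sumr.
by apply: eq_bigr => j _; rewrite scalefE !mxE.
Qed.

Lemma inord_val (k : 'I_4) : nat_of_ord (inord k : 'I_8) = k.
Proof. by rewrite inordK // (ltn_trans (ltn_ord k)). Qed.
Lemma inord_val4 (k : 'I_4) : nat_of_ord (inord (k + 4) : 'I_8) = (k + 4)%N.
Proof. by rewrite inordK // (leq_add2r 4 k.+1 4) ltn_ord. Qed.

Definition Dstd := ((dz C 0 /\\ dz C 1) /\\ dz C 2) /\\ dz C 3.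
Definition Dbstd := ((dzb C 0 /\\ dzb C 1) /\\ dzb C 2) /\\ dzb C 3.

Lemma vol_split : volume C = Dstd /\\ Dbstd.
Proof.
rewrite /volume /idzdzb /Dstd /Dbstd.
rewrite !wedgeZl !wedgeZr !scalefA.
rewrite (@shuf _ 1 (dz C 0) (dzb C 0) (dz C 1) (dzb C 1) (homog_dzb 0) (homog_dz 1)).
rewrite !wedgeZl !scalefA.
rewrite (@shuf _ 2 _ (dzb C 0 /\\ dzb C 1) (dz C 2) (dzb C 2) (hW11 (homog_dzb 0) (homog_dzb 1)) (homog_dz 2)).
rewrite !wedgeZl !scalefA.
rewrite (@shuf _ 3 _ ((dzb C 0 /\\ dzb C 1) /\\ dzb C 2) (dz C 3) (dzb C 3)
  (homogW (hW11 (homog_dzb 0) (homog_dzb 1)) (homog_dzb 2)) (homog_dz 3)).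
rewrite !scalefA.
have ii : 'i * 'i = -1 :> C by rewrite -expr2 sqrCi.
have i4 : 'i * 'i * 'i * 'i = 1 :> C by rewrite ii mulN1r mulNr ii opprK.
rewrite i4 mul1r -!exprD -signr_odd /= expr0.
by rewrite scale1f.
Qed.

Ltac elim_or H := match type of H with
 | is_true (_ || _) => case/orP: H => H; elim_or H
 | is_true (_ == _) => move/eqP: H => ->
 end.

Ltac lt_tac := let a := fresh "a" in let b := fresh "b" in
  let Ha := fresh "Ha" in let Hb := fresh "Hb" in
  move=> a b Ha Hb; rewrite !inE in Ha Hb; elim_or Ha; elim_or Hb;
  rewrite ?inord_val ?inord_val4 //.

Lemma Dstd_mono : exists S, Dstd = mono C S.
Proof.
rewrite /Dstd /dz mono_lt; last by lt_tac.
rewrite mono_lt; last by lt_tac.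
rewrite mono_lt; last by lt_tac.
by eexists.
Qed.

Lemma vol_mono : exists S, volume C = mono C S.
Proof.
rewrite vol_split /Dstd /Dbstd /dz /dzb.
rewrite mono_lt; last by lt_tac.
rewrite mono_lt; last by lt_tac.
rewrite mono_lt; last by lt_tac.
rewrite mono_lt; last by lt_tac.
rewrite mono_lt; last by lt_tac.
rewrite mono_lt; last by lt_tac.
rewrite mono_lt; last by lt_tac.
by eexists.
Qed.

Lemma vol_neq0 : volume C <> 0.
Proof.
case: vol_mono => S ->; move/(congr1 (fun h : F => h S)).
by rewrite monoE zerofE eqxx => /eqP; rewrite oner_eq0.
Qed.

End Conc.

Fact wedge_key : unit. Proof. exact: tt. Qed.
Definition wedgeL (C : numClosedFieldType) := locked_with wedge_key (@wedge C).
Lemma wedgeLE (C : numClosedFieldType) : @wedgeL C = @wedge C.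
Proof. by rewrite /wedgeL locked_withE. Qed.
Notation "f ^^ g" := (wedgeL f g) (at level 40, left associativity).

Section L.
Variable C : numClosedFieldType.
Local Notation F := {ffun {set 'I_8} -> C}.
Implicit Types (f g h u v X Y P Q : F).

Lemma LDl f g h : (f + g) ^^ h = f ^^ h + g ^^ h. Proof. by rewrite wedgeLE wedgeDl. Qed.
Lemma LDr f g h : h ^^ (f + g) = h ^^ f + h ^^ g. Proof. by rewrite wedgeLE wedgeDr. Qed.
Lemma LZl c f g : (c *f f) ^^ g = c *f (f ^^ g). Proof. by rewrite wedgeLE wedgeZl. Qed.
Lemma LZr c f g : f ^^ (c *f g) = c *f (f ^^ g). Proof. by rewrite wedgeLE wedgeZr. Qed.
Lemma LNl f g : (- f) ^^ g = - (f ^^ g). Proof. by rewrite wedgeLE wedgeNl. Qed.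
Lemma LNr f g : f ^^ (- g) = - (f ^^ g). Proof. by rewrite wedgeLE wedgeNr. Qed.
Lemma L0l f : 0 ^^ f = 0. Proof. by rewrite wedgeLE wedge0l. Qed.
Lemma L0r f : f ^^ 0 = 0. Proof. by rewrite wedgeLE wedge0r. Qed.
Lemma LA f g h : (f ^^ g) ^^ h = f ^^ (g ^^ h). Proof. by rewrite wedgeLE wedgeA. Qed.
Lemma homogWL p q f g : homog p f -> homog q g -> homog (p + q) (f ^^ g).
Proof. by rewrite wedgeLE; apply: homogW. Qed.
Lemma hW11L u v : homog 1 u -> homog 1 v -> homog 2 (u ^^ v).
Proof. by rewrite wedgeLE; apply: hW11. Qed.
Lemma step3L X u v P Q : homog 1 u -> homog 1 v -> homog 2 P ->
  (X ^^ (u ^^ v)) ^^ (P ^^ Q) = (X ^^ P) ^^ ((u ^^ v) ^^ Q).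
Proof. by rewrite wedgeLE; apply: step3. Qed.
Lemma GamL g1 h1 g2 h2 : homog 1 g1 -> homog 1 h1 -> homog 1 g2 -> homog 1 h2 ->
  ('i *f (g1 ^^ h1)) ^^ ('i *f (g2 ^^ h2)) = (g1 ^^ g2) ^^ (h1 ^^ h2).
Proof. by rewrite wedgeLE; apply: Gam. Qed.

Section Four.
Variables u0 u1 u2 u3 : F.
Hypotheses (h0 : homog 1 u0) (h1 : homog 1 u1) (h2 : homog 1 u2) (h3 : homog 1 u3).
Local Notation G := (G4 u0 u1 u2 u3).
Local Notation U := (U4 u0 u1 u2 u3).
Lemma T01L x0 x1 x2 x3 y0 y1 y2 y3 :
  (u0 ^^ u1) ^^ (G x0 x1 x2 x3 ^^ G y0 y1 y2 y3) = (x2 * y3 - x3 * y2) *f U.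
Proof. by rewrite wedgeLE; apply: T01. Qed.
Lemma T02L x0 x1 x2 x3 y0 y1 y2 y3 :
  (u0 ^^ u2) ^^ (G x0 x1 x2 x3 ^^ G y0 y1 y2 y3) = (- (x1 * y3 - x3 * y1)) *f U.
Proof. by rewrite wedgeLE; apply: T02. Qed.
Lemma T03L x0 x1 x2 x3 y0 y1 y2 y3 :
  (u0 ^^ u3) ^^ (G x0 x1 x2 x3 ^^ G y0 y1 y2 y3) = (x1 * y2 - x2 * y1) *f U.
Proof. by rewrite wedgeLE; apply: T03. Qed.
Lemma T12L x0 x1 x2 x3 y0 y1 y2 y3 :
  (u1 ^^ u2) ^^ (G x0 x1 x2 x3 ^^ G y0 y1 y2 y3) = (x0 * y3 - x3 * y0) *f U.
Proof. by rewrite wedgeLE; apply: T12. Qed.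
Lemma T13L x0 x1 x2 x3 y0 y1 y2 y3 :
  (u1 ^^ u3) ^^ (G x0 x1 x2 x3 ^^ G y0 y1 y2 y3) = (- (x0 * y2 - x2 * y0)) *f U.
Proof. by rewrite wedgeLE; apply: T13. Qed.
Lemma T23L x0 x1 x2 x3 y0 y1 y2 y3 :
  (u2 ^^ u3) ^^ (G x0 x1 x2 x3 ^^ G y0 y1 y2 y3) = (x0 * y1 - x1 * y0) *f U.
Proof. by rewrite wedgeLE; apply: T23. Qed.
End Four.

Section Key.
Variables u0 u1 u2 u3 v0 v1 v2 v3 : F.
Hypotheses (h0 : homog 1 u0) (h1 : homog 1 u1) (h2 : homog 1 u2) (h3 : homog 1 u3).
Hypotheses (k0 : homog 1 v0) (k1 : homog 1 v1) (k2 : homog 1 v2) (k3 : homog 1 v3).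

Definition alphaGL (a ab : C) :=
  (u0 ^^ u1) ^^ (v0 ^^ v1) + ((u0 ^^ u2) ^^ (v0 ^^ v2) + ((u0 ^^ u3) ^^ (v0 ^^ v3)
  + ((u1 ^^ u2) ^^ (v1 ^^ v2) + ((u1 ^^ u3) ^^ (v1 ^^ v3) + (u2 ^^ u3) ^^ (v2 ^^ v3)))))
  + a *f ((u0 ^^ u1) ^^ (v2 ^^ v3)) + ab *f ((u2 ^^ u3) ^^ (v0 ^^ v1)).

Definition cc (x0 x1 x2 x3 y0 y1 y2 y3 : C) (j : nat) : C :=
  match j with
  | 0%N => x2 * y3 - x3 * y2
  | 1%N => - (x1 * y3 - x3 * y1)
  | 2%N => x1 * y2 - x2 * y1
  | 3%N => x0 * y3 - x3 * y0
  | 4%N => - (x0 * y2 - x2 * y0)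
  | _ => x0 * y1 - x1 * y0 end.

Definition Qf (a ab : C) (c c' : nat -> C) :=
  c 0%N * c' 0%N + c 1%N * c' 1%N + c 2%N * c' 2%N + c 3%N * c' 3%N + c 4%N * c' 4%N
  + c 5%N * c' 5%N + a * c 0%N * c' 5%N + ab * c 5%N * c' 0%N.

Lemma KeyG a ab x0 x1 x2 x3 y0 y1 y2 y3 z0 z1 z2 z3 t0 t1 t2 t3 :
  (alphaGL a ab ^^ ('i *f (G4 u0 u1 u2 u3 x0 x1 x2 x3 ^^ G4 v0 v1 v2 v3 z0 z1 z2 z3)))
   ^^ ('i *f (G4 u0 u1 u2 u3 y0 y1 y2 y3 ^^ G4 v0 v1 v2 v3 t0 t1 t2 t3))
  = Qf a ab (cc x0 x1 x2 x3 y0 y1 y2 y3) (cc z0 z1 z2 z3 t0 t1 t2 t3)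
     *f (U4 u0 u1 u2 u3 ^^ U4 v0 v1 v2 v3).
Proof.
have hG x0' x1' x2' x3' : homog 1 (G4 u0 u1 u2 u3 x0' x1' x2' x3').
  by rewrite /G4; repeat apply: homogD; apply: homogZ.
have hGv x0' x1' x2' x3' : homog 1 (G4 v0 v1 v2 v3 x0' x1' x2' x3').
  by rewrite /G4; repeat apply: homogD; apply: homogZ.
rewrite LA (GamL (hG _ _ _ _) (hGv _ _ _ _) (hG _ _ _ _) (hGv _ _ _ _)).
have hP := hW11L (hG x0 x1 x2 x3) (hG y0 y1 y2 y3).
move: hP; set P := (G4 u0 u1 u2 u3 x0 x1 x2 x3 ^^ G4 u0 u1 u2 u3 y0 y1 y2 y3) => hP.
set Pb := (G4 v0 v1 v2 v3 z0 z1 z2 z3 ^^ G4 v0 v1 v2 v3 t0 t1 t2 t3).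
have eP : P = G4 u0 u1 u2 u3 x0 x1 x2 x3 ^^ G4 u0 u1 u2 u3 y0 y1 y2 y3 by [].
have ePb : Pb = G4 v0 v1 v2 v3 z0 z1 z2 z3 ^^ G4 v0 v1 v2 v3 t0 t1 t2 t3 by [].
clearbody P Pb.
rewrite /alphaGL.
rewrite !LDl !LZl.
rewrite !step3L //.
rewrite eP ePb.
rewrite (T01L h0 h1 h2 h3) (T02L h0 h1 h2 h3) (T03L h0 h1 h2 h3).
rewrite (T12L h0 h1 h2 h3) (T13L h0 h1 h2 h3) (T23L h0 h1 h2 h3).
rewrite (T01L k0 k1 k2 k3) (T02L k0 k1 k2 k3) (T03L k0 k1 k2 k3).
rewrite (T12L k0 k1 k2 k3) (T13L k0 k1 k2 k3) (T23L k0 k1 k2 k3).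
rewrite !LZl !LZr !scalefA.
(apply/ffunP => S; rewrite ?(addfE, scalefE); rewrite /Qf /cc; ring).
Qed.
End Key.
End L.

Section Ineq.
Variable C : numClosedFieldType.

Lemma amgm (u v : C) : u \is Num.real -> v \is Num.real -> u * v *+ 2 <= u ^+ 2 + v ^+ 2.
Proof.
move=> ur vr; rewrite -subr_ge0.
have -> : u ^+ 2 + v ^+ 2 - u * v *+ 2 = (u - v) ^+ 2 by rewrite -mulr_natr; ring.
by apply: real_exprn_even_ge0 => //; apply: rpredB.
Qed.

Lemma keyineq (a c0 c1 c2 c3 c4 c5 : C) : `|a| <= 2 -> c0 * c5 = c1 * c4 - c2 * c3 ->
  0 <= c0 * c0^* + c1 * c1^* + c2 * c2^* + c3 * c3^* + c4 * c4^* + c5 * c5^*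
       + a * c0 * c5^* + a^* * c5 * c0^*.
Proof.
move=> ha pl.
set z := a * c0 * c5^*.
have -> : a^* * c5 * c0^* = z^*.
  by rewrite /z !rmorphM /= conjCK; ring.
rewrite -!normCK -addrA -[z + z^*]opprK subr_ge0.
have hz : - (z + z^*) <= `|z| *+ 2.
  have zr : z + z^* \is Num.real by rewrite CrealE rmorphD /= conjCK addrC.
  have e1 : - (z + z^*) <= `|- (z + z^*)| by apply: real_ler_norm; rewrite rpredN.
  apply: (le_trans e1).
  by rewrite normrN mulr2n -{2}(norm_conjC z) ler_normD.
have nz : `|z| = `|a| * (`|c0| * `|c5|) by rewrite /z !normrM norm_conjC mulrA.
have p0 : 0 <= `|c0| * `|c5| by rewrite mulr_ge0.
have h1 : `|z| <= 2 * (`|c0| * `|c5|) by rewrite nz ler_wpM2r.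
have h2 : `|c0| * `|c5| <= `|c1| * `|c4| + `|c2| * `|c3|.
  by rewrite -!normrM pl ler_normB.
have r0 := normr_real c0; have r1 := normr_real c1; have r2 := normr_real c2.
have r3 := normr_real c3; have r4 := normr_real c4; have r5 := normr_real c5.
have a05 := amgm r0 r5; have a14 := amgm r1 r4; have a23 := amgm r2 r3.
apply: (le_trans hz).
have h3 : `|z| *+ 2 <= (`|c0| * `|c5|) *+ 2 + (`|c1| * `|c4| + `|c2| * `|c3|) *+ 2.
  rewrite -mulrnDl; apply: ler_wMn2r.
  apply: (le_trans h1); rewrite mulr_natl mulr2n; exact: lerD.
apply: (le_trans h3).
have -> : `|c0| ^+ 2 + `|c1| ^+ 2 + `|c2| ^+ 2 + `|c3| ^+ 2 + `|c4| ^+ 2 + `|c5| ^+ 2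
   = (`|c0| ^+ 2 + `|c5| ^+ 2) + ((`|c1| ^+ 2 + `|c4| ^+ 2) + (`|c2| ^+ 2 + `|c3| ^+ 2)).
  ring.
apply: lerD => //; rewrite mulrnDl; exact: lerD.
Qed.
End Ineq.

Section Main.
Variable R : realType.
Local Notation C := R[i].
Local Notation F := {ffun {set 'I_8} -> C}.
Variable w : 'M[C]_4.
Variable a : C.

Local Notation o k := (hol (row k w)).
Local Notation ob k := (ahol (row k w)).

Lemma hol_mulG (x : 'rV[C]_4) :
  hol (x *m w) = G4 (o 0) (o 1) (o 2) (o 3) (x 0 0) (x 0 1) (x 0 2) (x 0 3).
Proof. by rewrite hol_mul sum4. Qed.
Lemma ahol_mulG (x : 'rV[C]_4) :
  ahol (x *m w) = G4 (ob 0) (ob 1) (ob 2) (ob 3) (x 0 0)^* (x 0 1)^* (x 0 2)^* (x 0 3)^*.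
Proof. by rewrite ahol_mul sum4. Qed.

Lemma alpha_exp : alpha_a w a =
  alphaGL (o 0) (o 1) (o 2) (o 3) (ob 0) (ob 1) (ob 2) (ob 3) a a^*.
Proof.
rewrite /alpha_a /alphaGL wedgeLE !big_ord_recl big_ord0.
move: (o 0) (o 1) (o 2) (o 3) (ob 0) (ob 1) (ob 2) (ob 3) => A0 A1 A2 A3 B0 B1 B2 B3.
simpl.
by rewrite addr0 negneg.
Qed.

Lemma key2 (x y : 'rV[C]_4) :
  (alpha_a w a /\\ ('i *f (hol (x *m w) /\\ ahol (x *m w))))
     /\\ ('i *f (hol (y *m w) /\\ ahol (y *m w))) =
  Qf a a^* (cc (x 0 0) (x 0 1) (x 0 2) (x 0 3) (y 0 0) (y 0 1) (y 0 2) (y 0 3))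
    (cc (x 0 0)^* (x 0 1)^* (x 0 2)^* (x 0 3)^* (y 0 0)^* (y 0 1)^* (y 0 2)^* (y 0 3)^*)
  *f (U4 (o 0) (o 1) (o 2) (o 3) ^^ U4 (ob 0) (ob 1) (ob 2) (ob 3)).
Proof.
rewrite alpha_exp (hol_mulG x) (hol_mulG y) (ahol_mulG x) (ahol_mulG y).
rewrite -wedgeLE.
by apply: KeyG; apply: homog_hol || apply: homog_ahol.
Qed.

Definition del := det4 (w 0 0) (w 0 1) (w 0 2) (w 0 3) (w 1 0) (w 1 1) (w 1 2) (w 1 3)
  (w 2 0) (w 2 1) (w 2 2) (w 2 3) (w 3 0) (w 3 1) (w 3 2) (w 3 3).

Lemma U4o : U4 (o 0) (o 1) (o 2) (o 3) = del *f Dstd C.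
Proof.
rewrite /U4 !hol_G (W4 (homog_dz C 0) (homog_dz C 1) (homog_dz C 2) (homog_dz C 3)).
by rewrite !mxE.
Qed.

Lemma U4ob : U4 (ob 0) (ob 1) (ob 2) (ob 3) = del^* *f Dbstd C.
Proof.
rewrite /U4 !ahol_G (W4 (homog_dzb C 0) (homog_dzb C 1) (homog_dzb C 2) (homog_dzb C 3)).
rewrite !mxE; congr (_ *f _).
by rewrite /del /det4 !(rmorphB, rmorphD, rmorphM).
Qed.

Lemma formula (x y : 'rV[C]_4) :
  (alpha_a w a /\\ ('i *f (hol (x *m w) /\\ ahol (x *m w))))
     /\\ ('i *f (hol (y *m w) /\\ ahol (y *m w))) =
  (Qf a a^* (cc (x 0 0) (x 0 1) (x 0 2) (x 0 3) (y 0 0) (y 0 1) (y 0 2) (y 0 3))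
    (cc (x 0 0)^* (x 0 1)^* (x 0 2)^* (x 0 3)^* (y 0 0)^* (y 0 1)^* (y 0 2)^* (y 0 3)^*)
   * del * del^*) *f volume C.
Proof.
by rewrite key2 U4o U4ob LZl LZr !scalefA wedgeLE -vol_split.
Qed.

Lemma hol_row1 (k : 'I_4) : hol (row k (1%:M : 'M[C]_4)) = dz C k.
Proof.
rewrite /hol (bigD1 k) //= big1 ?addr0.
  by rewrite !mxE eqxx scale1f.
by move=> j /negbTE nj; rewrite !mxE eq_sym nj scale0f.
Qed.

Lemma del_neq0 : w \in unitmx -> del != 0.
Proof.
move=> Hw.
set v := invmx w.
have E : Dstd C = det4 (v 0 0) (v 0 1) (v 0 2) (v 0 3) (v 1 0) (v 1 1) (v 1 2) (v 1 3)
  (v 2 0) (v 2 1) (v 2 2) (v 2 3) (v 3 0) (v 3 1) (v 3 2) (v 3 3) *f U4 (o 0) (o 1) (o 2) (o 3).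
  rewrite /Dstd -!hol_row1 -(mulVmx Hw) !row_mul !hol_mulG.
  rewrite (W4 (homog_hol _) (homog_hol _) (homog_hol _) (homog_hol _)).
  by rewrite !mxE.
rewrite U4o scalefA in E.
apply/eqP => d0; move: E; rewrite d0 mulr0.
have nD : Dstd C <> 0.
  by move=> D0; apply: (@vol_neq0 C); rewrite vol_split D0 wedge0l.
move=> E; apply: nD; rewrite E; apply/ffunP => S; rewrite scalefE !zerofE mul0r //.
Qed.

Lemma scal_inj (c1 c2 : C) (V : F) : V <> 0 -> c1 *f V = c2 *f V -> c1 = c2.
Proof.
move=> nV E; apply/eqP; apply/negPn/negP => ne; apply: nV; apply/ffunP => S.
have := congr1 (fun h : F => h S) E; rewrite !scalefE zerofE => /eqP.
by rewrite -subr_eq0 -mulrBl mulf_eq0 subr_eq0 (negbTE ne) /= => /eqP.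
Qed.

Lemma ccJ (x0 x1 x2 x3 y0 y1 y2 y3 : C) (j : nat) :
  cc x0^* x1^* x2^* x3^* y0^* y1^* y2^* y3^* j = (cc x0 x1 x2 x3 y0 y1 y2 y3 j)^*.
Proof.
by case: j => [|[|[|[|[|j]]]]] /=; rewrite ?(rmorphN, rmorphB, rmorphM).
Qed.

Lemma Qf_ge0 (x0 x1 x2 x3 y0 y1 y2 y3 : C) : `|a| <= 2 ->
  0 <= Qf a a^* (cc x0 x1 x2 x3 y0 y1 y2 y3) (cc x0^* x1^* x2^* x3^* y0^* y1^* y2^* y3^*).
Proof.
move=> ha; rewrite /Qf !ccJ; apply: keyineq => //.
by rewrite /cc; ring.
Qed.

Lemma main : w \in unitmx -> (positive22 (alpha_a w a) <-> `|a| <= 2).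
Proof.
move=> Hw; split; last first.
  move=> ha g1 g2.
  have e1 : g1 = (g1 *m invmx w) *m w by rewrite mulmxKV.
  have e2 : g2 = (g2 *m invmx w) *m w by rewrite mulmxKV.
  rewrite e1 e2 formula.
  eexists; split; last reflexivity.
  by rewrite -mulrA mulr_ge0 ?Qf_ge0 ?mul_conjC_ge0.
move=> Hpos; case: (boolP (`|a| <= 2)) => // hna; exfalso.
have lt2 : 2 < `|a|.
  by rewrite real_ltNge ?hna // ?normr_real // ger0_real.
have na0 : `|a| != 0 by rewrite gt_eqF // (lt_trans _ lt2) // ltr0n.
have a0 : a != 0 by rewrite -normr_eq0.
set na := `|a| in lt2 na0.
set sv := - (a^* / na).
pose x : 'rV[C]_4 := \row_(j < 4) nth 0 [:: 1; 0; sv; 0] j.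
pose y : 'rV[C]_4 := \row_(j < 4) nth 0 [:: 0; 1; 0; 1] j.
have [c [hc E]] := Hpos (x *m w) (y *m w).
rewrite formula in E; have Ec := scal_inj (@vol_neq0 C) E.
move: Ec; rewrite !mxE /= /Qf /cc /= ?(rmorph0, rmorph1, conjC0, conjC1).
have nJ : na^* = na by apply: conj_Creal; apply: normr_real.
have aJ : a^* = na ^+ 2 / a by rewrite /na normCK mulrC mulKf.
have svJ : sv^* = - (a / na).
  rewrite /sv rmorphN rmorphM /= conjCK fmorphV /=.
  by congr (- (a / _)); apply: conj_Creal; apply: normr_real.
rewrite svJ.
have -> : sv = - (na ^+ 2 / a / na) by rewrite /sv aJ.
rewrite aJ => Ec.
move: Ec; rewrite [X in X * del * del^*](_ : _ = 4 - 2 * na); last first.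
  by field; apply/andP; split.
move=> Ec.
have h4 : (4 : C) - 2 * na < 0.
  rewrite subr_lt0 (_ : (4 : C) = 2 * 2); last by rewrite -natrM.
  by rewrite ltr_pM2l // ltr0n.
have : c < 0.
  by rewrite -Ec -mulrA pmulr_llt0 // mul_conjC_gt0 del_neq0.
by move/(le_lt_trans hc); rewrite ltxx.
Qed.

End Main.

End Aux.

Theorem proposition4 (R : realType) (w : 'M[R[i]]_4) (a : R[i]) :
  w \in unitmx ->
  (positive22 (alpha_a w a) <-> `|a| <= 2).
Proof. exact: (@Aux.main R w a). Qed.
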